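(* Let $Y,X_1,\dots,X_k$ be Boolean variables and let $\gamma$ be a probabilistic circuit of the form $(Y\wedge\alpha)\vee(\neg Y\wedge\beta)$, where the root OR gate has parameter $\theta_Y$ on the wire from $Y\wedge\alpha$ and $\theta_{\neg Y}$ on the wire from $\neg Y\wedge\beta$, and $\alpha,\beta$ are probabilistic circuits over $X_1,\dots,X_k$ that are structurally identical (the same circuit graph, differing only in their OR-wire parameters $\theta^\alpha_{(n,c)}$ and $\theta^\beta_{(n,c)}$), with all parameters strictly positive. Let $\vee\alpha$ denote the logistic circuit whose root is an OR gate with the single input $\alpha$ carrying parameter $\theta_{\mathit{root}}=\log(\theta_Y/\theta_{\neg Y})$, and in which every OR-gate wire $(n,c)$ of $\alpha$ carries parameter $\log(\theta^\alpha_{(n,c)}/\theta^\beta_{(n,c)})$. Then for every $\mathbf{x}\in\{0,1\}^k$ with $\Pr_\gamma(\mathbf{x})>0$, $\Pr_\gamma(Y=1\mid\mathbf{x})$ equals the probability $\Pr(Y=1\mid\mathbf{x})$ defined by the logistic circuit $\vee\alpha$.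
   Context: A logical circuit over Boolean variables is a rooted directed acyclic graph whose leaves are literals $X$ or $\neg X$ and whose inner nodes are AND gates or OR gates. AND gates are decomposable (inputs mention disjoint variable sets), OR gates are deterministic (for any complete assignment at most one input is satisfied) and smooth (all inputs of an OR gate mention the same variables). A probabilistic circuit is such a circuit with a nonnegative parameter on each input wire of each OR gate, the parameters on the inputs of each OR gate summing to $1$; for a complete assignment $\mathbf{x}$ it defines $\Pr_n(\mathbf{x})=[\mathbf{x}\models n]$ at a leaf, $\Pr_n(\mathbf{x})=\prod_i\Pr_{c_i}(\mathbf{x})$ at an AND gate with children $c_i$, and $\Pr_n(\mathbf{x})=\sum_i\Pr_{c_i}(\mathbf{x})\theta_i$ at an OR gate with inputs $(c_i,\theta_i)$; conditional probabilities are derived from the joint distribution at the root. A logistic circuit is a logical circuit with decomposable AND gates, deterministic OR gates, an OR root, and a real parameter on each OR-gate input wire. For binary $\mathbf{x}$, the flow $f(n,\mathbf{x},c)$ from child $c$ of OR gate $n$ is $1$ if $\mathbf{x}$ satisfies the sentence of $c$ and $0$ otherwise. Weight function: $g_n(\mathbf{x})=0$ at a leaf; $g_n(\mathbf{x})=\sum_i g_{c_i}(\mathbf{x})$ at an AND gate; $g_n(\mathbf{x})=\sum_i f(n,\mathbf{x},c_i)(g_{c_i}(\mathbf{x})+\theta_i)$ at an OR gate with inputs $(c_i,\theta_i)$; with root $r$, the logistic circuit defines $\Pr(Y=1\mid\mathbf{x})=1/(1+\exp(-g_r(\mathbf{x})))$. *)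

(* Defs.v *)
From Stdlib Require Import Reals List Bool.
Import ListNotations.
Open Scope R_scope.

(* Circuits as (unfolded) trees.  Leaves are literals over variables indexed
   by nat ([CLit v true] is X_v, [CLit v false] is ~X_v); an OR gate carries a
   list of inputs, each with the parameter (of type T) on its wire. *)
Inductive circ (T : Type) : Type :=
| CLit : nat -> bool -> circ T
| CAnd : list (circ T) -> circ T
| COr : list (T * circ T) -> circ T.
Arguments CLit {T}.
Arguments CAnd {T}.
Arguments COr {T}.

Fixpoint cmap {T U : Type} (f : T -> U) (c : circ T) : circ U :=
  match c with
  | CLit v b => CLit v b
  | CAnd cs => CAnd (map (cmap f) cs)
  | COr ws => COr (map (fun w => let '(p, d) := w in (f p, cmap f d)) ws)
  end.

Fixpoint vars {T : Type} (c : circ T) : list nat :=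
  match c with
  | CLit v _ => [v]
  | CAnd cs => flat_map vars cs
  | COr ws => flat_map (fun w => let '(_, d) := w in vars d) ws
  end.

Fixpoint sat {T : Type} (x : nat -> bool) (c : circ T) : bool :=
  match c with
  | CLit v b => Bool.eqb (x v) b
  | CAnd cs => forallb (sat x) cs
  | COr ws => existsb (fun w => let '(_, d) := w in sat x d) ws
  end.

Definition children {T : Type} (ws : list (T * circ T)) : list (circ T) :=
  map snd ws.

Definition dflt {T : Type} : circ T := CAnd [].

Definition and_decomposable {T : Type} (cs : list (circ T)) : Prop :=
  forall i j v, (i < j < length cs)%nat ->
    In v (vars (nth i cs dflt)) -> ~ In v (vars (nth j cs dflt)).

Definition or_deterministic {T : Type} (ws : list (T * circ T)) : Prop :=
  forall (x : nat -> bool) i j, (i < j < length ws)%nat ->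
    sat x (nth i (children ws) dflt) = true ->
    sat x (nth j (children ws) dflt) = false.

Definition or_smooth {T : Type} (ws : list (T * circ T)) : Prop :=
  forall i j v, (i < length ws)%nat -> (j < length ws)%nat ->
    (In v (vars (nth i (children ws) dflt)) <-> In v (vars (nth j (children ws) dflt))).

Fixpoint all_list (l : list Prop) : Prop :=
  match l with [] => True | P :: l' => P /\ all_list l' end.

Definition sumR (l : list R) : R := fold_right Rplus 0 l.
Definition prodR (l : list R) : R := fold_right Rmult 1 l.

Fixpoint decomposable_deterministic {T : Type} (c : circ T) : Prop :=
  match c with
  | CLit _ _ => True
  | CAnd cs => and_decomposable cs /\ all_list (map decomposable_deterministic cs)
  | COr ws => or_deterministic ws /\
      all_list (map (fun w => let '(_, d) := w in decomposable_deterministic d) ws)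
  end.

Fixpoint smooth {T : Type} (c : circ T) : Prop :=
  match c with
  | CLit _ _ => True
  | CAnd cs => all_list (map smooth cs)
  | COr ws => or_smooth ws /\ all_list (map (fun w => let '(_, d) := w in smooth d) ws)
  end.

Fixpoint pc_params (c : circ R) : Prop :=
  match c with
  | CLit _ _ => True
  | CAnd cs => all_list (map pc_params cs)
  | COr ws => (forall w, In w ws -> 0 <= fst w) /\ sumR (map fst ws) = 1 /\
      all_list (map (fun w => let '(_, d) := w in pc_params d) ws)
  end.

Fixpoint pos_params (c : circ R) : Prop :=
  match c with
  | CLit _ _ => True
  | CAnd cs => all_list (map pos_params cs)
  | COr ws => (forall w, In w ws -> 0 < fst w) /\
      all_list (map (fun w => let '(_, d) := w in pos_params d) ws)
  end.

Definition is_pc (c : circ R) : Prop :=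
  decomposable_deterministic c /\ smooth c /\ pc_params c.

Fixpoint pr (x : nat -> bool) (c : circ R) : R :=
  match c with
  | CLit v b => if Bool.eqb (x v) b then 1 else 0
  | CAnd cs => prodR (map (pr x) cs)
  | COr ws => sumR (map (fun w => let '(t, d) := w in pr x d * t) ws)
  end.

(* Variable Y has index 0; X_1..X_k have indices 1..k. *)
Definition asg (y : bool) (x : nat -> bool) : nat -> bool :=
  fun i => match i with O => y | S _ => x i end.

Definition pr_marg (c : circ R) (x : nat -> bool) : R :=
  pr (asg true x) c + pr (asg false x) c.
Definition pr_cond_Y (c : circ R) (x : nat -> bool) : R :=
  pr (asg true x) c / pr_marg c x.

Fixpoint lg (x : nat -> bool) (c : circ R) : R :=
  match c with
  | CLit _ _ => 0
  | CAnd cs => sumR (map (lg x) cs)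
  | COr ws => sumR (map (fun w => let '(t, d) := w in
                           if sat x d then lg x d + t else 0) ws)
  end.
Definition logistic_prob (c : circ R) (x : nat -> bool) : R :=
  1 / (1 + exp (- lg x c)).

(* gamma = (Y /\ alpha) \/ (~Y /\ beta) where alpha, beta share the graph
   [c : circ (R*R)] with parameters given by first / second components. *)
Definition gamma_of (thY thnY : R) (c : circ (R * R)) : circ R :=
  COr [(thY, CAnd [CLit 0%nat true; cmap fst c]);
       (thnY, CAnd [CLit 0%nat false; cmap snd c])].

Definition lc_of (thY thnY : R) (c : circ (R * R)) : circ R :=
  COr [(ln (thY / thnY), cmap (fun p => ln (fst p / snd p)) c)].

(* Main.v *)
Require Import Defs.
From Stdlib Require Import Reals List Bool Lra Lia.
Import ListNotations.
Open Scope R_scope.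

Fixpoint circ_ind2 {T : Type} (P : circ T -> Prop)
  (HL : forall v b, P (CLit v b))
  (HA : forall cs, Forall P cs -> P (CAnd cs))
  (HO : forall ws, Forall (fun w => P (snd w)) ws -> P (COr ws)) (c : circ T) : P c :=
  match c with
  | CLit v b => HL v b
  | CAnd cs => HA cs ((fix F (l : list (circ T)) : Forall P l :=
        match l with [] => Forall_nil _
        | d :: l' => Forall_cons _ (circ_ind2 P HL HA HO d) (F l') end) cs)
  | COr ws => HO ws ((fix F (l : list (T * circ T)) : Forall (fun w => P (snd w)) l :=
        match l with [] => Forall_nil _
        | d :: l' => Forall_cons _ (circ_ind2 P HL HA HO (snd d)) (F l') end) ws)
  end.

Lemma sat_cmap {T U} (f : T -> U) x (c : circ T) : sat x (cmap f c) = sat x c.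
Proof.
  induction c using circ_ind2; simpl; auto.
  - induction H; simpl; auto. rewrite H, IHForall; auto.
  - induction H; simpl; auto. destruct x0 as [p d]; simpl in *. rewrite H, IHForall; auto.
Qed.

Lemma pr_unsat x (c : circ R) : sat x c = false -> pr x c = 0.
Proof.
  induction c using circ_ind2; simpl.
  - intros H; rewrite H; auto.
  - induction H; simpl; intros Hs; [discriminate|].
    apply andb_false_iff in Hs as [Hs|Hs].
    + rewrite H by auto. ring.
    + unfold prodR in *. simpl. rewrite IHForall by auto. ring.
  - induction H; simpl; intros Hs; [reflexivity|].
    destruct x0 as [p d]; simpl in *.
    apply orb_false_iff in Hs as [Hs1 Hs2].
    unfold sumR in *; simpl. rewrite H, IHForall by auto. ring.
Qed.

Lemma agree_sat {T} x x' (c : circ T) :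
  (forall v, In v (vars c) -> x v = x' v) -> sat x c = sat x' c.
Proof.
  induction c using circ_ind2; simpl; intros Hv.
  - rewrite Hv; auto.
  - induction H; simpl; auto. simpl in Hv.
    rewrite H, IHForall; auto; intros; apply Hv; apply in_or_app; auto.
  - induction H; simpl; auto. destruct x0 as [p d]; simpl in *.
    rewrite H, IHForall; auto; intros; apply Hv; apply in_or_app; auto.
Qed.

Lemma agree_pr x x' (c : circ R) :
  (forall v, In v (vars c) -> x v = x' v) -> pr x c = pr x' c.
Proof.
  induction c using circ_ind2; simpl; intros Hv.
  - rewrite Hv; auto.
  - induction H; simpl; auto. simpl in Hv. unfold prodR in *. simpl.
    rewrite H, IHForall; auto; intros; apply Hv; apply in_or_app; auto.
  - induction H; simpl; auto. destruct x0 as [p d]; simpl in *. unfold sumR in *; simpl.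
    rewrite H, IHForall; auto; intros; apply Hv; apply in_or_app; auto.
Qed.

Lemma agree_lg x x' (c : circ R) :
  (forall v, In v (vars c) -> x v = x' v) -> lg x c = lg x' c.
Proof.
  induction c using circ_ind2; simpl; intros Hv.
  - auto.
  - induction H; simpl; auto. simpl in Hv. unfold sumR in *. simpl.
    rewrite H, IHForall; auto; intros; apply Hv; apply in_or_app; auto.
  - induction H; simpl; auto. destruct x0 as [p d]; simpl in *. unfold sumR in *; simpl.
    rewrite (agree_sat x x' d), H, IHForall; auto; intros; apply Hv; apply in_or_app; auto.
Qed.

Lemma vars_cmap {T U} (f : T -> U) (c : circ T) : vars (cmap f c) = vars c.
Proof.
  induction c using circ_ind2; simpl; auto.
  - induction H; simpl; auto. rewrite H, IHForall; auto.
  - induction H; simpl; auto. destruct x as [p d]; simpl in *. rewrite H, IHForall; auto.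
Qed.

Lemma lg_or_unsat x (ws : list (R * circ R)) :
  sat x (COr ws) = false -> lg x (COr ws) = 0.
Proof.
  induction ws as [|[p d] ws IH]; simpl; auto.
  intros Hs; apply orb_false_iff in Hs as [H1 H2].
  simpl in IH. unfold sumR in *; simpl. rewrite H1. rewrite IH by auto. ring.
Qed.

Lemma ordet_tail {T} (w : T * circ T) ws : or_deterministic (w :: ws) -> or_deterministic ws.
Proof.
  intros H x i j Hij H1. apply (H x (S i) (S j)); simpl; auto. lia.
Qed.

Lemma ordet_head {T} x (w : T * circ T) ws : or_deterministic (w :: ws) ->
  sat x (snd w) = true -> sat x (COr ws) = false.
Proof.
  intros H Hw. destruct (sat x (COr ws)) eqn:E; auto. exfalso.
  simpl in E. apply existsb_exists in E as [[p d] [Hin Hd]].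
  apply (In_nth ws (p, d) (p, dflt)) in Hin as [j [Hj Hn]].
  assert (Hc : nth j (children ws) dflt = d).
  { unfold children. change (@dflt T) with (snd (p, @dflt T)). rewrite map_nth, Hn. auto. }
  specialize (H x 0%nat (S j)). simpl in H. unfold children in H. simpl in H.
  fold (children ws) in H. rewrite Hc in H. rewrite H in Hd; auto. discriminate. lia.
Qed.

Definition hh (p : R * R) : R := ln (fst p / snd p).

Lemma main x (c : circ (R * R)) :
  pos_params (cmap fst c) -> pos_params (cmap snd c) ->
  decomposable_deterministic (cmap fst c) -> sat x c = true ->
  pr x (cmap fst c) = pr x (cmap snd c) * exp (lg x (cmap hh c)) /\ 0 < pr x (cmap snd c).
Proof.
  induction c using circ_ind2; simpl.
  - intros _ _ _ Hs. rewrite Hs, exp_0. lra.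
  - induction H; simpl; intros P1 P2 D Hs.
    + unfold prodR, sumR; simpl. rewrite exp_0. lra.
    + destruct P1 as [P1a P1b], P2 as [P2a P2b], D as [Da [Db Dc]].
      apply andb_true_iff in Hs as [Hs1 Hs2].
      destruct (H P1a P2a Db Hs1) as [E1 L1].
      assert (Dt : and_decomposable (map (cmap fst) l)).
      { intros i j v Hij Hv. apply (Da (S i) (S j) v); simpl; auto. lia. }
      destruct (IHForall P1b P2b (conj Dt Dc) Hs2) as [E2 L2].
      unfold prodR, sumR in *; simpl. rewrite E1, E2, exp_plus. split; [ring|].
      apply Rmult_lt_0_compat; auto.
  - induction H as [|[p d] ws Hd Hws IH]; simpl; intros P1 P2 D Hs; [discriminate|].
    destruct P1 as [P1a [P1b P1c]], P2 as [P2a [P2b P2c]], D as [Da [Db Dc]].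
    assert (pa : 0 < fst p) by (apply (P1a (fst p, cmap fst d)); left; auto).
    assert (pb : 0 < snd p) by (apply (P2a (snd p, cmap snd d)); left; auto).
    unfold sumR in *; simpl in *.
    destruct (sat x d) eqn:Ed; simpl in Hs.
    + destruct (Hd P1b P2b Db eq_refl) as [E1 L1].
      assert (Hr : sat x (COr ws) = false).
      { pose proof (ordet_head x _ _ Da) as Hh. simpl in Hh.
        rewrite <- (sat_cmap fst x (COr ws)). apply Hh. rewrite sat_cmap; auto. }
      assert (R1 := pr_unsat x (cmap fst (COr ws))). rewrite sat_cmap in R1.
      assert (R2 := pr_unsat x (cmap snd (COr ws))). rewrite sat_cmap in R2.
      assert (R3 := lg_or_unsat x (map (fun w => let '(p0, d0) := w in (hh p0, cmap hh d0)) ws)).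
      change (COr (map (fun w => let '(p0, d0) := w in (hh p0, cmap hh d0)) ws)) with (cmap hh (COr ws)) in R3.
      rewrite sat_cmap in R3.
      simpl in R1, R2, R3. unfold sumR in R1, R2, R3.
      rewrite R1, R2, R3 by auto. rewrite sat_cmap, Ed.
      rewrite E1. unfold hh. rewrite !Rplus_0_r, exp_plus, exp_ln.
      2:{ apply Rdiv_lt_0_compat; auto. }
      split; [field; lra|]. apply Rmult_lt_0_compat; auto.
    + assert (R1 := pr_unsat x (cmap fst d)). rewrite sat_cmap in R1.
      assert (R2 := pr_unsat x (cmap snd d)). rewrite sat_cmap in R2.
      rewrite R1, R2, sat_cmap, Ed by auto.
      destruct (IH (conj (fun w Hw => P1a w (or_intror Hw)) P1c)
                   (conj (fun w Hw => P2a w (or_intror Hw)) P2c)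
                   (conj (ordet_tail _ _ Da) Dc) Hs) as [E L].
      rewrite E, Rplus_0_l. split; [ring|lra].
Qed.

Theorem proposition4 (k : nat) (c : circ (R * R)) (thY thnY : R) :
  (forall v, In v (vars c) -> (1 <= v <= k)%nat) ->
  is_pc (gamma_of thY thnY c) ->
  0 < thY -> 0 < thnY ->
  pos_params (cmap fst c) -> pos_params (cmap snd c) ->
  forall x : nat -> bool,
    0 < pr_marg (gamma_of thY thnY c) x ->
    pr_cond_Y (gamma_of thY thnY c) x = logistic_prob (lc_of thY thnY c) x.
Proof.
  intros Hv Hpc HY HnY P1 P2 x Hm.
  assert (Ag : forall y (f : R * R -> R), (forall v, In v (vars (cmap f c)) -> asg y x v = x v)).
  { intros y f v Hin. rewrite vars_cmap in Hin. destruct v; [specialize (Hv 0%nat Hin); lia|reflexivity]. }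
  destruct Hpc as [[_ [[_ [_ [D _]]] _]] _].
  unfold pr_cond_Y, pr_marg, logistic_prob, gamma_of, lc_of in *. simpl in *.
  unfold sumR, prodR in *; simpl in *.
  rewrite !(agree_pr _ x _ (Ag _ _)) in *.
  change (cmap (fun p => ln (fst p / snd p)) c) with (cmap hh c).
  destruct (sat x c) eqn:Es.
  - destruct (main x c P1 P2 D Es) as [E L]. rewrite sat_cmap, Es, E.
    rewrite !Rplus_0_r, Ropp_plus_distr, exp_plus, exp_Ropp, exp_Ropp, exp_ln
      by (apply Rdiv_lt_0_compat; auto).
    set (B := pr x (cmap snd c)) in *. set (e := exp (lg x (cmap hh c))).
    assert (0 < e) by apply exp_pos.
    assert (0 < B * e * thY) by (apply Rmult_lt_0_compat; auto; apply Rmult_lt_0_compat; auto).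
    assert (0 < B * thnY) by (apply Rmult_lt_0_compat; auto).
    field. repeat split; try lra.
    assert (0 < e * thY) by (apply Rmult_lt_0_compat; auto). lra.
  - exfalso.
    assert (R1 := pr_unsat x (cmap fst c)). rewrite sat_cmap in R1.
    assert (R2 := pr_unsat x (cmap snd c)). rewrite sat_cmap in R2.
    rewrite R1, R2 in Hm by auto. lra.
Qed.
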